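(* For all words $a,b,u,v\in\{m_1,\dots,m_{k+1}\}^*$, we have $aub\sim avb$ if and only if $u\sim v$.
   Context: Fix $k\ge 0$. A system of $k$ stacks in series consists of an input queue, stacks $1,\dots,k$, and an output queue. A state records the contents of each stack and each queue (finitely many distinct labelled elements); there is one additional ''illegal'' state $\varnothing$; $\mathcal S_k$ denotes the set of all states including $\varnothing$. The moves are $m_1,\dots,m_{k+1}$: $m_i$ ($1\le i\le k$) pushes an element onto stack $i$, taking it from the front of the input queue if $i=1$ and popping it from the top of stack $i-1$ if $i>1$; $m_{k+1}$ pops the top of stack $k$ and enqueues it at the back of the output queue. For a word $w$ and state $s$, $w\ast s$ is obtained by applying the moves of $w$ left to right, with $w\ast s=\varnothing$ if some move is illegal and $w\ast\varnothing=\varnothing$. For words $x,y$ define $x\sim y$ iff $x\ast s=y\ast s$ for all $s\in\mathcal S_k$. *)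

(* Defs.v *)
From mathcomp Require Import all_boot.
Set Implicit Arguments. Unset Strict Implicit. Unset Printing Implicit Defensive.

(* Elements are labelled by nats.
   - inq  : input queue, front = head
   - stks : stacks 1..k (stks`_0 is stack 1), top of each stack = head
   - outq : output queue, back = last element *)
Record config := Config { inq : seq nat; stks : seq (seq nat); outq : seq nat }.

(* A state is [Some c] for a configuration c, or [None] = the illegal state. *)
Definition state := option config.

(* Take the element that move m_{i+1} (0-based index i) moves:
   from the front of the input queue if i = 0, else from the top of stack i
   (0-based stack index i-1). *)
Definition pop_src (i : nat) (c : config) : option (nat * config) :=
  if i is j.+1 then
    match nth [::] (stks c) j with
    | x :: r => Some (x, Config (inq c) (set_nth [::] (stks c) j r) (outq c))
    | [::] => None
    end
  else
    match inq c with
    | x :: r => Some (x, Config r (stks c) (outq c))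
    | [::] => None
    end.

(* Put x at the destination of move m_{i+1}: stack i+1 if i < k,
   else the back of the output queue. *)
Definition push_dst (k i : nat) (x : nat) (c : config) : config :=
  if i < k then Config (inq c) (set_nth [::] (stks c) i (x :: nth [::] (stks c) i)) (outq c)
  else Config (inq c) (stks c) (rcons (outq c) x).

(* Moves m_1, ..., m_{k+1} are represented by i : 'I_k.+1 (m_{i+1}). *)
Definition move (k : nat) (i : 'I_k.+1) (s : state) : state :=
  match s with
  | None => None
  | Some c => match pop_src i c with
              | None => None
              | Some (x, c') => Some (push_dst k i x c')
              end
  end.

Definition act (k : nat) (w : seq 'I_k.+1) (s : state) : state :=
  foldl (fun s i => move i s) s w.

(* Elements of S_k: the illegal state, or a configuration with exactly k
   stacks whose elements are all distinct. *)
Definition valid_state (k : nat) (s : state) : bool :=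
  match s with
  | None => true
  | Some c => (size (stks c) == k) && uniq (inq c ++ flatten (stks c) ++ outq c)
  end.

(* x ~ y iff x * s = y * s for all s in S_k. *)
Definition wequiv (k : nat) (x y : seq 'I_k.+1) : Prop :=
  forall s : state, valid_state k s -> act x s = act y s.

(* Main.v *)
Require Import Defs.
From mathcomp Require Import all_boot.
From mathcomp Require Import zify.
Set Implicit Arguments. Unset Strict Implicit.

Definition amove (i : nat) (M : seq (seq nat)) : option (seq (seq nat)) :=
  match drop i M with
  | (x :: r) :: l :: rest => Some (take i M ++ r :: (x :: l) :: rest)
  | _ => None end.
Definition rmove (i : nat) (M : seq (seq nat)) : option (seq (seq nat)) :=
  match drop i M with
  | r :: (x :: l) :: rest => Some (take i M ++ (x :: r) :: l :: rest)
  | _ => None end.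
Definition aact (w : seq nat) (o : option (seq (seq nat))) :=
  foldl (fun o i => obind (amove i) o) o w.
Definition ract (w : seq nat) (o : option (seq (seq nat))) :=
  foldr (fun i o => obind (rmove i) o) o w.

Lemma amove_cat T x r l rest :
  amove (size T) (T ++ (x :: r) :: l :: rest) = Some (T ++ r :: (x :: l) :: rest).
Proof. by rewrite /amove drop_size_cat // take_size_cat. Qed.
Lemma rmove_cat T x r l rest :
  rmove (size T) (T ++ r :: (x :: l) :: rest) = Some (T ++ (x :: r) :: l :: rest).
Proof. by rewrite /rmove drop_size_cat // take_size_cat. Qed.

Lemma amoveP i M M' : amove i M = Some M' ->
  exists T x r l rest, [/\ M = T ++ (x :: r) :: l :: rest, size T = i &
     M' = T ++ r :: (x :: l) :: rest].
Proof.
rewrite /amove; case E: (drop i M) => [|[|x r] [|l rest]] //= [<-].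
have Hi : i <= size M.
  by case: (leqP i (size M)) => // /ltnW H; move: E; rewrite drop_oversize.
exists (take i M), x, r, l, rest; split => //; last by rewrite size_takel.
by rewrite -E cat_take_drop.
Qed.
Lemma rmoveP i M M' : rmove i M = Some M' ->
  exists T x r l rest, [/\ M = T ++ r :: (x :: l) :: rest, size T = i &
     M' = T ++ (x :: r) :: l :: rest].
Proof.
rewrite /rmove; case E: (drop i M) => [|r [|[|x l] rest]] //= [<-].
have Hi : i <= size M.
  by case: (leqP i (size M)) => // /ltnW H; move: E; rewrite drop_oversize.
exists (take i M), x, r, l, rest; split => //; last by rewrite size_takel.
by rewrite -E cat_take_drop.
Qed.

Lemma amoveK i M M' : amove i M = Some M' -> rmove i M' = Some M.
Proof. by case/amoveP => T [x [r [l [rest [-> <- ->]]]]]; rewrite rmove_cat. Qed.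
Lemma rmoveK i M M' : rmove i M = Some M' -> amove i M' = Some M.
Proof. by case/rmoveP => T [x [r [l [rest [-> <- ->]]]]]; rewrite amove_cat. Qed.

Lemma amove_size i M M' : amove i M = Some M' -> size M' = size M.
Proof. by case/amoveP => T [x [r [l [rest [-> _ ->]]]]]; rewrite !size_cat. Qed.
Lemma rmove_size i M M' : rmove i M = Some M' -> size M' = size M.
Proof. by case/rmoveP => T [x [r [l [rest [-> _ ->]]]]]; rewrite !size_cat. Qed.

Lemma amove_perm i M M' : amove i M = Some M' -> perm_eq (flatten M) (flatten M').
Proof.
case/amoveP => T [x [r [l [rest [-> _ ->]]]]].
apply/permP => p; rewrite !flatten_cat !count_cat /= ?count_cat /=; lia.
Qed.
Lemma rmove_perm i M M' : rmove i M = Some M' -> perm_eq (flatten M) (flatten M').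
Proof.
case/rmoveP => T [x [r [l [rest [-> _ ->]]]]].
apply/permP => p; rewrite !flatten_cat !count_cat /= ?count_cat /=; lia.
Qed.

Lemma amove_nth i M M' : amove i M = Some M' ->
  forall j, size (nth [::] M j) <= (size (nth [::] M' j)).+1.
Proof.
case/amoveP => T [x [r [l [rest [-> _ ->]]]]] j; rewrite !nth_cat.
case: ifP => // _; case: (j - size T) => [|[|d]] //=; lia.
Qed.
Lemma rmove_nth i M M' : rmove i M = Some M' ->
  forall j, size (nth [::] M j) <= (size (nth [::] M' j)).+1.
Proof.
case/rmoveP => T [x [r [l [rest [-> _ ->]]]]] j; rewrite !nth_cat.
case: ifP => // _; case: (j - size T) => [|[|d]] //=; lia.
Qed.

Lemma amove_legal i M : i.+1 < size M -> nth [::] M i != [::] -> exists M', amove i M = Some M'.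
Proof.
move=> Hi; rewrite /amove (drop_nth [::]) ?(ltnW Hi) // (drop_nth [::]) //.
by case: (nth [::] M i) => // x r _; eexists.
Qed.
Lemma rmove_legal i M : i.+1 < size M -> nth [::] M i.+1 != [::] -> exists M', rmove i M = Some M'.
Proof.
move=> Hi; rewrite /rmove (drop_nth [::]) ?(ltnW Hi) // (drop_nth [::]) //.
by case: (nth [::] M i.+1) => // x r _; eexists.
Qed.

Lemma aact_None w : aact w None = None.
Proof. by elim: w. Qed.
Lemma ract_None w : ract w None = None.
Proof. by elim: w => //= i w ->. Qed.
Lemma aact_cat w1 w2 o : aact (w1 ++ w2) o = aact w2 (aact w1 o).
Proof. exact: foldl_cat. Qed.

Lemma ractK w M T : ract w (Some M) = Some T -> aact w (Some T) = Some M.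
Proof.
elim: w M T => [|i w IH] M T /=; first by case=> ->.
case E: (ract w (Some M)) => [T1|] //= /rmoveK -> /=; exact: IH.
Qed.
Lemma aactK w M Y : aact w (Some M) = Some Y -> ract w (Some Y) = Some M.
Proof.
elim: w M Y => [|i w IH] M Y /=; first by case=> ->.
case E: (amove i M) => [M1|]; last by rewrite aact_None.
move/IH => -> /=; exact: amoveK.
Qed.
Lemma aact_inj w M1 M2 Y : aact w (Some M1) = Some Y -> aact w (Some M2) = Some Y -> M1 = M2.
Proof. by move=> /aactK H1 /aactK; rewrite H1 => -[]. Qed.

Lemma aact_inv w M M' : aact w (Some M) = Some M' ->
  size M' = size M /\ perm_eq (flatten M) (flatten M').
Proof.
elim: w M => [|i w IH] M /=; first by case=> ->.
case E: (amove i M) => [M1|]; last by rewrite aact_None.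
move/IH => [-> H]; split; first exact: amove_size E.
by rewrite (permPl (amove_perm E)).
Qed.
Lemma ract_inv w M M' : ract w (Some M) = Some M' ->
  size M' = size M /\ perm_eq (flatten M) (flatten M').
Proof.
elim: w M' => [|i w IH] M' /=; first by case=> ->.
case E: (ract w (Some M)) => [M1|] //= E2.
have [H1 H2] := IH _ E.
split; first by rewrite (rmove_size E2).
by rewrite (permPl H2) (rmove_perm E2).
Qed.

Lemma aact_legal w M K : all (fun i => i.+1 < size M) w ->
  (forall j, j.+1 < size M -> size w + K <= size (nth [::] M j)) ->
  exists M', [/\ aact w (Some M) = Some M', size M' = size M &
     forall j, j.+1 < size M -> K <= size (nth [::] M' j)].
Proof.
elim: w M => [|i w IH] M /=.
  by move=> _ H; exists M; split.
case/andP=> Hi Hw H.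
have [M1 E] : exists M1, amove i M = Some M1.
  apply: amove_legal => //; have := H _ Hi; by case: (nth [::] M i).
rewrite E /=; have Hs := amove_size E.
have [|j Hj|M' [H1 H2 H3]] := IH M1.
- by rewrite Hs.
- rewrite Hs in Hj; have := H j Hj; have := amove_nth E j; lia.
- exists M'; split => //; first by rewrite H2. by move=> j; rewrite -Hs; apply: H3.
Qed.

Lemma ract_legal w M K : all (fun i => i.+1 < size M) w ->
  (forall j, 0 < j < size M -> size w + K <= size (nth [::] M j)) ->
  exists M', [/\ ract w (Some M) = Some M', size M' = size M &
     forall j, 0 < j < size M -> K <= size (nth [::] M' j)].
Proof.
elim: w K => [|i w IH] K /=.
  by move=> _ H; exists M; split.
case/andP=> Hi Hw H.
have [j Hj|M1 [E1 E2 E3]] := IH K.+1 Hw.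
  have := H j Hj; lia.
have [M2 E] : exists M2, rmove i M1 = Some M2.
  apply: rmove_legal; first by rewrite E2.
  have := E3 i.+1; rewrite Hi => /(_ isT). by case: (nth [::] M1 i.+1).
exists M2; rewrite E1 /= E; split => //; first by rewrite (rmove_size E).
move=> j Hj; have := E3 j Hj; have := rmove_nth E j; lia.
Qed.

Definition P (j x : nat) (M : seq (seq nat)) := count_mem x (flatten (take j.+1 M)).

Lemma P_amove i M M' j x : amove i M = Some M' -> P j x M' <= P j x M.
Proof.
case/amoveP => T [y [r [l [rest [-> _ ->]]]]]; rewrite /P !take_cat.
case: ifP => // _; case: (j.+1 - size T) => [|[|d]] /=;
  rewrite !flatten_cat !count_cat /= ?count_cat /=; lia.
Qed.
Lemma P_aact w M M' j x : aact w (Some M) = Some M' -> P j x M' <= P j x M.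
Proof.
elim: w M => [|i w IH] M /=; first by case=> ->.
case E: (amove i M) => [M1|]; last by rewrite aact_None.
move/IH => H; exact: leq_trans H (P_amove _ _ E).
Qed.

Fixpoint padF (F : nat -> seq nat) (j : nat) (L : seq (seq nat)) :=
  if L is l :: L' then (l ++ F j) :: padF F j.+1 L' else [::].

Lemma size_padF F j L : size (padF F j L) = size L.
Proof. by elim: L j => //= l L IH j; rewrite IH. Qed.
Lemma padF_cat F j s t : padF F j (s ++ t) = padF F j s ++ padF F (j + size s) t.
Proof. by elim: s j => [|l s IH] j /=; rewrite ?addn0 // IH addnS. Qed.
Lemma take_padF F j n L : take n (padF F j L) = padF F j (take n L).
Proof. by elim: L j n => [|l L IH] j [|n] //=; rewrite IH. Qed.
Lemma nth_padF F j L n : n < size L -> nth [::] (padF F j L) n = nth [::] L n ++ F (j + n).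
Proof. by elim: L j n => [|l L IH] j [|n] //=; rewrite ?addn0 // => H; rewrite IH // addnS. Qed.
Lemma count_padF F j L p : count p (flatten (padF F j L)) =
  count p (flatten L) + count p (flatten [seq F t | t <- iota j (size L)]).
Proof. by elim: L j => [|l L IH] j //=; rewrite !count_cat IH; lia. Qed.
Lemma padF_inj F j L1 L2 : padF F j L1 = padF F j L2 -> L1 = L2.
Proof.
elim: L1 j L2 => [|l1 L1 IH] j [|l2 L2] //= [E1 E2].
rewrite (IH _ _ E2); congr (_ :: _).
have Hs : size l1 = size l2 by have := congr1 size E1; rewrite !size_cat; lia.
by rewrite -(take_size_cat (F j) (erefl (size l1))) E1 Hs take_size_cat.
Qed.

Lemma pad_step F i L D : amove i L = Some D -> amove i (padF F 0 L) = Some (padF F 0 D).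
Proof.
case/amoveP => T [x [r [l [rest [-> <- ->]]]]].
rewrite !padF_cat /= -(size_padF F 0 T); exact: amove_cat.
Qed.

Lemma pad_fail F i L : i.+1 < size L -> amove i L = None -> 0 < size (F i) ->
  exists Z, amove i (padF F 0 L) = Some Z /\ P i (head 0 (F i)) Z < P i (head 0 (F i)) (padF F 0 L).
Proof.
move=> Hi E HF.
have Hn : nth [::] L i = [::].
  case: (nth [::] L i =P [::]) => // /eqP H; have [M' E'] := amove_legal Hi H; by rewrite E' in E.
have HL : L = take i L ++ [::] :: nth [::] L i.+1 :: drop i.+2 L.
  by rewrite -Hn -!drop_nth ?cat_take_drop // ltnW.
have Ht : size (take i L) = i by rewrite size_takel // ltnW // ltnW.
case EF: (F i) HF => [//|s fr] _.
rewrite HL !padF_cat /= add0n Ht EF.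
rewrite -{-2}Ht -{1}(size_padF F 0) amove_cat; rewrite Ht; eexists; split; first by [].
have Hf : (i.+1 < i) = false by lia.
rewrite /P !take_cat size_padF Ht Hf subSnn /= !flatten_cat !count_cat /= eqxx; lia.
Qed.

Lemma pad_run F w L X : (forall i, 0 < size (F i)) -> all (fun i => i.+1 < size L) w ->
  aact w (Some (padF F 0 L)) = Some X ->
  match aact w (Some L) with
  | Some D => X = padF F 0 D
  | None => exists i, i.+1 < size L /\ P i (head 0 (F i)) X < P i (head 0 (F i)) (padF F 0 L)
  end.
Proof.
move=> HF; elim: w L => [|i w IH] L /=; first by move=> _ [<-].
case/andP=> Hi Hw.
case E: (amove i L) => [L1|].
  rewrite (pad_step F E) /= => HX.
  have Hs := amove_size E.
  have Hw1 : all (fun i => i.+1 < size L1) w by rewrite Hs.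
  have := IH L1 Hw1 HX.
  case: (aact w (Some L1)) => // -[j [Hj Hlt]].
  exists j; split; first by rewrite -Hs.
  exact: leq_trans Hlt (P_amove _ _ (pad_step F E)).
have [Z [EZ HZ]] := pad_fail Hi E (HF i).
rewrite EZ /= aact_None => HX; exists i; split => //.
exact: leq_ltn_trans (P_aact _ _ HX) HZ.
Qed.

Lemma P_eq F i x D L : size D = size L -> x \notin flatten D -> x \notin flatten L ->
  P i x (padF F 0 D) = P i x (padF F 0 L).
Proof.
move=> Hs HD HL; rewrite /P !take_padF !count_padF !size_take Hs.
have H0 M : x \notin flatten M -> count_mem x (flatten (take i.+1 M)) = 0.
  move=> H; apply/count_memPn; move: H.
  by rewrite -{1}(cat_take_drop i.+1 M) flatten_cat mem_cat negb_or => /andP[].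
by rewrite !H0.
Qed.

Lemma max_bound s x : x \in s -> x <= foldr maxn 0 s.
Proof.
elim: s => //= y s IH; rewrite in_cons => /orP[/eqP ->|/IH H]; first exact: leq_maxl.
exact: leq_trans H (leq_maxr _ _).
Qed.

Lemma flatten_F m N j n :
  flatten [seq iota (m + t * N) N | t <- iota j n] = iota (m + j * N) (n * N).
Proof.
elim: n j => [|n IH] j //=; rewrite IH mulSn iotaD; congr (_ ++ iota _ _); lia.
Qed.

Lemma not_fresh_Du L Du m x : perm_eq (flatten L) (flatten Du) ->
  (forall y, y \in flatten L -> y < m) -> m <= x -> x \notin flatten Du.
Proof.
move=> Hp Hf Hx; rewrite -(perm_mem Hp); apply/negP => /Hf; lia.
Qed.

Lemma core (a u v b : seq nat) L :
  uniq (flatten L) -> all (fun i => i.+1 < size L) (a ++ u ++ v ++ b) ->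
  (forall M, size M = size L -> uniq (flatten M) ->
     aact (a ++ u ++ b) (Some M) = aact (a ++ v ++ b) (Some M)) ->
  aact u (Some L) = aact v (Some L).
Proof.
move=> HU Hall H.
rewrite !all_cat in Hall; case/and4P: Hall => Ha Hu Hv Hb.
pose N := (size a + size u + size v + size b).+1.
pose m := (foldr maxn 0 (flatten L)).+1.
pose F := fun t => iota (m + t * N) N.
have HF : forall i, 0 < size (F i) by move=> i; rewrite size_iota.
have Hfresh : forall x, x \in flatten L -> x < m by move=> x /max_bound.
pose P0 := padF F 0 L.
have HsP0 : size P0 = size L by rewrite size_padF.
have HnP0 : forall j, j < size L -> N <= size (nth [::] P0 j).
  by move=> j Hj; rewrite nth_padF // size_cat size_iota leq_addl.
have HuP0 : uniq (flatten P0).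
  have Hp : perm_eq (flatten P0) (flatten L ++ iota m (size L * N)).
    apply/permP => p; rewrite count_padF count_cat flatten_F mul0n addn0 //.
  rewrite (perm_uniq Hp) cat_uniq HU iota_uniq andbT /=.
  apply/hasPn => y; rewrite mem_iota => /andP[Hy _]; apply/negP => /Hfresh; lia.
have [||T [ET HsT _]] := ract_legal (w:=a) (M:=P0) (K:=0).
- by rewrite HsP0.
- move=> j /andP[_ Hj]; rewrite HsP0 in Hj; have := HnP0 j Hj; rewrite /N; lia.
have [HsT' HpT] := ract_inv ET.
have HT : aact (a ++ u ++ b) (Some T) = aact (a ++ v ++ b) (Some T).
  by apply: H; [rewrite HsT' HsP0 | rewrite -(perm_uniq HpT)].
rewrite !aact_cat (ractK ET) in HT.
have [||Xu [EXu HsXu HXu]] := aact_legal (w:=u) (M:=P0) (K:=size b).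
- by rewrite HsP0.
- move=> j Hj; rewrite HsP0 in Hj; have := HnP0 j (ltnW Hj); rewrite /N; lia.
have [||Xv [EXv HsXv HXv]] := aact_legal (w:=v) (M:=P0) (K:=size b).
- by rewrite HsP0.
- move=> j Hj; rewrite HsP0 in Hj; have := HnP0 j (ltnW Hj); rewrite /N; lia.
have [||Yu [EYu _ _]] := aact_legal (w:=b) (M:=Xu) (K:=0).
- by rewrite HsXu HsP0.
- by move=> j Hj; rewrite addn0; apply: HXu; rewrite -HsXu.
have [||Yv [EYv _ _]] := aact_legal (w:=b) (M:=Xv) (K:=0).
- by rewrite HsXv HsP0.
- by move=> j Hj; rewrite addn0; apply: HXv; rewrite -HsXv.
rewrite EXu EXv /= EYu EYv in HT; case: HT => HY; rewrite HY in EYu.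
have HX := aact_inj EYu EYv; rewrite -HX in EXv.
have R1 := pad_run HF Hu EXu; have R2 := pad_run HF Hv EXv.
have Hs i : head 0 (F i) = m + i * N by [].
case Eu: (aact u (Some L)) R1 => [Du|] R1; case Ev: (aact v (Some L)) R2 => [Dv|] R2 //.
- by rewrite R1 in R2; rewrite (padF_inj R2).
- have [HsD HpD] := aact_inv Eu.
  case: R2 => i [Hi]; rewrite R1 (P_eq F i (x:=head 0 (F i)) HsD) ?ltnn //.
    by apply: not_fresh_Du HpD Hfresh _; rewrite Hs leq_addr.
  by apply/negP => /Hfresh; rewrite Hs; lia.
- have [HsD HpD] := aact_inv Ev.
  case: R1 => i [Hi]; rewrite R2 (P_eq F i (x:=head 0 (F i)) HsD) ?ltnn //.
    by apply: not_fresh_Du HpD Hfresh _; rewrite Hs leq_addr.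
  by apply/negP => /Hfresh; rewrite Hs; lia.
Qed.

Definition abs (c : config) : seq (seq nat) := inq c :: rcons (stks c) (rev (outq c)).

Lemma set_nth_cat' (s1 s2 : seq (seq nat)) y z n : size s1 = n ->
  set_nth [::] (s1 ++ y :: s2) n z = s1 ++ z :: s2.
Proof. by move=> <-; elim: s1 => //= a s1 ->. Qed.
Lemma nth_cat' (s1 s2 : seq (seq nat)) y n : size s1 = n -> nth [::] (s1 ++ y :: s2) n = y.
Proof. by move=> <-; rewrite nth_cat ltnn subnn. Qed.
Lemma amove_cat_nil T Z : amove (size T) (T ++ [::] :: Z) = None.
Proof. by rewrite /amove drop_size_cat. Qed.

Lemma move_sim k (i : 'I_k.+1) c : size (stks c) = k ->
  omap abs (move i (Some c)) = amove i (abs c).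
Proof.
case: c => q st o /= Hs; case: i => [[|j] Hj] /=.
- rewrite /abs /=; case: q => [|x r] //=.
  case: st Hs => [|s0 ss] /= <-.
    by rewrite /push_dst /= rev_rcons.
  by rewrite /push_dst /=.
- have Hj' : j < size st by rewrite Hs.
  have [s1 [sj [s2 [Est Hs1]]]] : exists s1 sj s2, st = s1 ++ sj :: s2 /\ size s1 = j.
    exists (take j st), (nth [::] st j), (drop j.+1 st); split.
      by rewrite -drop_nth // cat_take_drop.
    by rewrite size_takel // ltnW.
  subst st; clear Hj'; rewrite /abs /= rcons_cat /= nth_cat' //.
  have Hsz : j.+1 = size (q :: s1) by rewrite /= Hs1.
  case: sj Hs => [|x r] Hs; first by rewrite Hsz -cat_cons amove_cat_nil.
  rewrite set_nth_cat' // Hsz -cat_cons; case: s2 Hs => [|s' s3] Hs /=.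
  + rewrite (amove_cat (q :: s1)) /push_dst -Hs size_cat /= addn1 ltnn /=.
    by rewrite rev_rcons rcons_cat.
  + rewrite (amove_cat (q :: s1)) /push_dst -Hs size_cat /=.
    have -> : (size s1).+1 < size s1 + (size s3).+2 by lia.
    rewrite -cat_rcons nth_cat' ?size_rcons // set_nth_cat' ?size_rcons //=.
    by rewrite rcons_cat /= cat_rcons.
Qed.

Lemma act_None_c k (w : seq 'I_k.+1) : act w None = None.
Proof. by elim: w. Qed.
Lemma act_cat k (w1 w2 : seq 'I_k.+1) s : act (w1 ++ w2) s = act w2 (act w1 s).
Proof. exact: foldl_cat. Qed.

Lemma size_abs c : size (abs c) = (size (stks c)).+2.
Proof. by rewrite /abs /= size_rcons. Qed.

Lemma act_sim k (w : seq 'I_k.+1) c : size (stks c) = k ->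
  omap abs (act w (Some c)) = aact (map val w) (Some (abs c)).
Proof.
elim: w c => [|i w IH] c Hs; first by [].
change (omap abs (act w (move i (Some c))) = aact (map val w) (amove i (abs c))).
have H' := move_sim i Hs.
case E: (move i (Some c)) H' => [c1|] H'.
  rewrite -H'; apply: (IH c1).
  have := amove_size (esym H'); rewrite !size_abs Hs; lia.
by rewrite act_None_c -H' aact_None.
Qed.

Lemma abs_inj c1 c2 : abs c1 = abs c2 -> c1 = c2.
Proof.
case: c1 c2 => q1 s1 o1 [q2 s2 o2]; rewrite /abs /= => -[-> /eqP].
by rewrite eqseq_rcons => /andP[/eqP -> /eqP H]; rewrite (can_inj revK H).
Qed.

Lemma flat_abs c : perm_eq (flatten (abs c)) (inq c ++ flatten (stks c) ++ outq c).
Proof.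
apply/permP => p; rewrite /abs /= -cats1 flatten_cat !count_cat /= ?cats0 ?count_cat ?count_rev addn0.
by [].
Qed.

Definition conc k (M : seq (seq nat)) :=
  Config (head [::] M) (take k (behead M)) (rev (last [::] (behead M))).

Lemma abs_conc k M : size M = k.+2 -> abs (conc k M) = M.
Proof.
case: M => [|q M'] //= [Hs]; case/lastP: M' Hs => [|S y] //; rewrite size_rcons => -[Hs].
by rewrite /abs /conc /= last_rcons revK -[rcons S y]cats1 (take_size_cat _ Hs) cats1.
Qed.

Lemma act_valid k (w : seq 'I_k.+1) s : valid_state k s -> valid_state k (act w s).
Proof.
case: s => [c|]; last by rewrite act_None_c.
move=> /= /andP[/eqP Hs Hu].
case E: (act w (Some c)) => [c'|] //=.
have := act_sim w Hs; rewrite E /= => H'.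
have [Hsz Hp] := aact_inv (esym H').
rewrite !size_abs Hs in Hsz; case: Hsz => ->; rewrite eqxx /=.
by rewrite -(perm_uniq (flat_abs c')) -(perm_uniq Hp) (perm_uniq (flat_abs c)).
Qed.

Theorem lemma3 (k : nat) (a b u v : seq 'I_k.+1) :
  wequiv (a ++ u ++ b) (a ++ v ++ b) <-> wequiv u v.
Proof.
split => H s Hv.
- case: s Hv => [c|] Hv; last by rewrite !act_None_c.
  move: (Hv) => /= /andP[/eqP Hs Hu].
  suff : omap abs (act u (Some c)) = omap abs (act v (Some c)).
    by case: (act u _) => [x|]; case: (act v _) => [y|] //= E; rewrite (abs_inj (congr1 (fun o => if o is Some z then z else [::]) E)).
  rewrite !act_sim //.
  apply: (core (a:=map val a) (b:=map val b)).
  + by rewrite (perm_uniq (flat_abs c)).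
  + rewrite -!map_cat; apply/allP => i /mapP [j _ ->].
    by rewrite size_abs Hs ltnS ltn_ord.
  + move=> M HM HuM.
    have HM2 : size M = k.+2 by rewrite HM size_abs Hs.
    have Habs := abs_conc HM2.
    have Hv0 : valid_state k (Some (conc k M)).
      rewrite /valid_state -(perm_uniq (flat_abs (conc k M))) Habs HuM andbT.
      by have := size_abs (conc k M); rewrite Habs HM2; case=> <-.
    have := congr1 (omap abs) (H _ Hv0).
    by rewrite !act_sim ?Habs ?map_cat //; have := size_abs (conc k M); rewrite Habs HM2; case.
- rewrite !act_cat H //; exact: act_valid.
Qed.
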